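(* If $v/u=q^{-r}$ for some nonnegative integer $r$, then \[ {}_3\phi_2\left(\begin{array}{c}y/x,\ q/abt,\ q/avt\\ yq/a,\ q/aut\end{array};q,\frac{xbvt}{u}\right)=\frac{(ybt,xq/a;q)_\infty}{(xbt,yq/a;q)_\infty}\,{}_3\phi_2\left(\begin{array}{c}y/x,\ v/u,\ q/abt\\ q/xbt,\ q/aut\end{array};q,q\right). \]
   Context: $q$ is a fixed complex number with $0<|q|<1$. $(a;q)_\infty=\prod_{k\ge0}(1-aq^k)$, $(a;q)_n=(a;q)_\infty/(aq^n;q)_\infty$, $(a_1,\dots,a_m;q)_n=\prod_i(a_i;q)_n$. ${}_r\phi_s\left(\begin{array}{c}a_1,\dots,a_r\\ b_1,\dots,b_s\end{array};q,x\right)=\sum_{n\ge0}\frac{(a_1,\dots,a_r;q)_n}{(q,b_1,\dots,b_s;q)_n}\big[(-1)^nq^{\binom n2}\big]^{1+s-r}x^n$. *)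

(* Defs.v *)
From Stdlib Require Import Reals.
From Coquelicot Require Import Coquelicot.
Open Scope C_scope.

Fixpoint qpoch (a q : C) (n : nat) : C :=
  match n with
  | O => 1
  | S m => qpoch a q m * (1 - a * pow_n q m)
  end.

(* (a;q)_oo : limit of the partial products (converges for |q|<1) *)
Definition qpoch_inf (a q : C) : C :=
  @lim C_CompleteNormedModule (filtermap (qpoch a q) eventually).

(* general term of 3phi2 (here 1+s-r = 0, so no extra (-1)^n q^(n choose 2) factor) *)
Definition phi32_term (a1 a2 a3 b1 b2 q z : C) (n : nat) : C :=
  qpoch a1 q n * qpoch a2 q n * qpoch a3 q n
  / (qpoch q q n * qpoch b1 q n * qpoch b2 q n) * pow_n z n.

Definition phi32 (a1 a2 a3 b1 b2 q z : C) : C :=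
  @lim C_CompleteNormedModule (filtermap (@sum_n C_AbelianMonoid (phi32_term a1 a2 a3 b1 b2 q z)) eventually).

(* Main.v *)
Require Import Defs.
From Stdlib Require Import Reals.
From Coquelicot Require Import Coquelicot.
Open Scope C_scope.
From Stdlib Require Import Lra Lia.
Open Scope C_scope.


Lemma lim_C (f : nat -> C) (l : C) :
  filterlim f eventually (locally l) ->
  @lim C_CompleteNormedModule (filtermap f eventually) = l.
Proof.
  intros Hf.
  assert (HP : ProperFilter (filtermap f eventually)).
  { apply filtermap_proper_filter. apply eventually_filter. }
  assert (Hc : cauchy (filtermap f eventually)).
  { intros eps. exists l. apply Hf. apply locally_ball. }
  apply eq_close. intros eps.
  pose (e2 := mkposreal (pos eps / 2) (is_pos_div_2 eps)).
  generalize (@complete_cauchy C_CompleteNormedModule (filtermap f eventually) HP Hc e2). intros H1.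
  assert (H2 : filtermap f eventually (ball l e2)) by (apply Hf; apply locally_ball).
  destruct (filter_and _ _ H1 H2) as [N HN].
  destruct (HN N (Nat.le_refl N)) as [Ha Hb].
  replace (pos eps) with (pos e2 + pos e2)%R by (simpl; field).
  eapply ball_triangle. apply Ha. apply ball_sym. apply Hb.
Qed.

Definition cv (f : nat -> C) (l : C) := filterlim f eventually (locally l).

Lemma cv_intro f l :
  (forall eps : R, (0 < eps)%R -> exists N, forall n, (N <= n)%nat -> (Cmod (f n - l) < eps)%R) ->
  cv f l.
Proof.
  intros H P [eps He]. destruct (H eps (cond_pos eps)) as [N HN]. exists N.
  intros n Hn. apply He. apply (@norm_compat1 C_AbsRing C_NormedModule). change (Cmod (f n - l) < eps)%R. apply HN; auto.
Qed.

Lemma cv_elim f l : cv f l ->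
  forall eps : R, (0 < eps)%R -> exists N, forall n, (N <= n)%nat -> (Cmod (f n - l) < eps)%R.
Proof.
  intros H eps He.
  assert (Hl : locally l (fun y => (Cmod (y - l) < eps)%R)).
  { apply (@locally_le_locally_norm C_AbsRing C_NormedModule). exists (mkposreal eps He). intros y Hy.
    unfold ball_norm in Hy. exact Hy. }
  destruct (H _ Hl) as [N HN]. exists N. exact HN.
Qed.

Lemma cv_mult f g l m : cv f l -> cv g m -> cv (fun n => f n * g n) (l * m).
Proof.
  intros Hf Hg. apply cv_intro. intros eps He.
  assert (H1 : (0 < Rmin 1 (eps / (2 * (Cmod m + 1))))%R).
  { apply Rmin_pos. lra. apply Rdiv_lt_0_compat. lra. generalize (Cmod_ge_0 m); lra. }
  assert (H2 : (0 < eps / (2 * (Cmod l + 1)))%R).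
  { apply Rdiv_lt_0_compat. lra. generalize (Cmod_ge_0 l); lra. }
  destruct (cv_elim f l Hf _ H1) as [N1 HN1]. destruct (cv_elim g m Hg _ H2) as [N2 HN2].
  exists (N1 + N2)%nat. intros n Hn.
  specialize (HN1 n ltac:(lia)). specialize (HN2 n ltac:(lia)).
  replace (f n * g n - l * m) with (f n * (g n - m) + m * (f n - l)) by ring.
  eapply Rle_lt_trans. apply Cmod_triangle. rewrite !Cmod_mult.
  assert (Hfn : (Cmod (f n) <= Cmod l + 1)%R).
  { assert (Ht := Cmod_triangle l (f n - l)). replace (l + (f n - l)) with (f n) in Ht by ring.
    generalize (Rmin_l 1 (eps / (2 * (Cmod m + 1)))). lra. }
  assert (Ha : (Cmod (f n) * Cmod (g n - m) < (Cmod l + 1) * (eps / (2 * (Cmod l + 1))))%R).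
  { apply Rle_lt_trans with ((Cmod l + 1) * Cmod (g n - m))%R.
    apply Rmult_le_compat_r. apply Cmod_ge_0. lra.
    apply Rmult_lt_compat_l. generalize (Cmod_ge_0 l); lra. lra. }
  assert (Hb : (Cmod m * Cmod (f n - l) <= (Cmod m + 1) * (eps / (2 * (Cmod m + 1))))%R).
  { apply Rmult_le_compat; try apply Cmod_ge_0; try lra.
    generalize (Rmin_r 1 (eps / (2 * (Cmod m + 1)))). lra. }
  assert (E1 : ((Cmod l + 1) * (eps / (2 * (Cmod l + 1))) = eps / 2)%R).
  { field. generalize (Cmod_ge_0 l); lra. }
  assert (E2 : ((Cmod m + 1) * (eps / (2 * (Cmod m + 1))) = eps / 2)%R).
  { field. generalize (Cmod_ge_0 m); lra. }
  lra.
Qed.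

Lemma cv_plus f g l m : cv f l -> cv g m -> cv (fun n => f n + g n) (l + m).
Proof.
  intros Hf Hg. apply cv_intro. intros eps He.
  destruct (cv_elim f l Hf (eps/2) ltac:(lra)) as [N1 HN1].
  destruct (cv_elim g m Hg (eps/2) ltac:(lra)) as [N2 HN2].
  exists (N1 + N2)%nat. intros n Hn.
  specialize (HN1 n ltac:(lia)). specialize (HN2 n ltac:(lia)).
  replace (f n + g n - (l + m)) with ((f n - l) + (g n - m)) by ring.
  eapply Rle_lt_trans. apply Cmod_triangle. lra.
Qed.

Lemma cv_const c : cv (fun _ => c) c.
Proof. apply filterlim_const. Qed.

Lemma cv_ext f g l : (forall n, f n = g n) -> cv f l -> cv g l.
Proof. intros H Hf. unfold cv. eapply filterlim_ext; eauto. Qed.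

Lemma cv_unique f l m : cv f l -> cv f m -> l = m.
Proof. intros H1 H2. rewrite <- (lim_C f l H1). apply lim_C; auto. Qed.

Lemma cv_shift f l k : cv f l -> cv (fun n => f (k + n)%nat) l.
Proof.
  intros H. apply cv_intro. intros eps He. destruct (cv_elim f l H eps He) as [N HN].
  exists N. intros n Hn. apply HN. lia.
Qed.

Lemma cv_unshift f l k : cv (fun n => f (k + n)%nat) l -> cv f l.
Proof.
  intros H. apply cv_intro. intros eps He. destruct (cv_elim _ l H eps He) as [N HN].
  exists (k + N)%nat. intros n Hn. replace n with (k + (n - k))%nat by lia. apply HN. lia.
Qed.

Lemma cv_norm_le f l c : cv f l -> (forall n, (Cmod (f n) <= c)%R) -> (Cmod l <= c)%R.
Proof.
  intros H Hb. destruct (Rle_or_lt (Cmod l) c) as [?|Hlt]; auto.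
  destruct (cv_elim f l H (Cmod l - c)%R ltac:(lra)) as [N HN].
  specialize (HN N (Nat.le_refl _)). specialize (Hb N).
  assert (Ht := Cmod_triangle (f N) (l - f N)).
  replace (f N + (l - f N)) with l in Ht by ring.
  replace (l - f N) with (- (f N - l)) in Ht by ring. rewrite Cmod_opp in Ht. lra.
Qed.

Lemma cv_norm_ge f l c : cv f l -> (forall n, (c <= Cmod (f n))%R) -> (c <= Cmod l)%R.
Proof.
  intros H Hb. destruct (Rle_or_lt c (Cmod l)) as [?|Hlt]; auto.
  destruct (cv_elim f l H (c - Cmod l)%R ltac:(lra)) as [N HN].
  specialize (HN N (Nat.le_refl _)). specialize (Hb N).
  assert (Ht := Cmod_triangle l (f N - l)).
  replace (l + (f N - l)) with (f N) in Ht by ring. lra.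
Qed.

Fixpoint psum (f : nat -> C) (N : nat) : C :=
  match N with O => 0 | S M => psum f M + f M end.
Lemma psum_S f N : psum f (S N) = psum f N + f N.
Proof. reflexivity. Qed.
Lemma psum_sum_n f N : psum f (S N) = @sum_n C_AbelianMonoid f N.
Proof.
  induction N. simpl. rewrite sum_O. change (0 + f 0%nat = f 0%nat). ring.
  rewrite sum_Sn. rewrite <- IHN. reflexivity.
Qed.

Definition ser f l := cv (psum f) l.

Lemma ser_ex (f : nat -> C) (K rho : R) : (0 <= rho < 1)%R -> (forall n, (Cmod (f n) <= K * rho ^ n)%R) ->
  exists l, ser f l.
Proof.
  intros Hr Hb.
  assert (H : @ex_series C_AbsRing C_CompleteNormedModule f).
  { apply (@ex_series_le C_AbsRing C_CompleteNormedModule f (fun n => K * rho ^ n)%R).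
    intros n. change (Cmod (f n) <= K * rho ^ n)%R. apply Hb.
    apply (ex_series_scal_l (V:=R_NormedModule) K (fun n => rho ^ n)%R). apply ex_series_geom.
    rewrite Rabs_pos_eq; lra. }
  destruct H as [l Hl]. exists l. unfold ser. apply (cv_unshift _ _ 1).
  eapply cv_ext. 2: exact Hl. intros n. simpl. rewrite <- psum_sum_n. reflexivity.
Qed.

Lemma ser_lim f l : ser f l -> @lim C_CompleteNormedModule (filtermap (@sum_n C_AbelianMonoid f) eventually) = l.
Proof.
  intros H. apply lim_C. fold (cv (@sum_n C_AbelianMonoid f) l).
  eapply cv_ext. 2: apply (cv_shift _ _ 1 H). intros n. simpl. apply psum_sum_n.
Qed.

Lemma ser_ext f g l : (forall n, f n = g n) -> ser f l -> ser g l.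
Proof. intros H Hs. eapply cv_ext. 2: exact Hs. intros n. induction n. reflexivity.
  rewrite !psum_S, IHn, H. reflexivity. Qed.

Lemma ser_unique f l m : ser f l -> ser f m -> l = m.
Proof. apply cv_unique. Qed.

Lemma ser_plus f g l m : ser f l -> ser g m -> ser (fun n => f n + g n) (l + m).
Proof. intros H1 H2. eapply cv_ext. 2: apply (cv_plus _ _ _ _ H1 H2).
  intros n. induction n. simpl. ring. rewrite !psum_S, <- IHn. ring. Qed.

Lemma ser_scal c f l : ser f l -> ser (fun n => c * f n) (c * l).
Proof. intros H1. eapply cv_ext. 2: apply (cv_mult _ _ _ _ (cv_const c) H1).
  intros n. induction n. simpl. ring. rewrite !psum_S, <- IHn. ring. Qed.

Lemma ser_zero : ser (fun _ => 0) 0.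
Proof. eapply cv_ext. 2: apply cv_const. intros n. induction n. reflexivity. rewrite psum_S, <- IHn. ring. Qed.

Lemma ser_psum (F : nat -> nat -> C) (L : nat -> C) K :
  (forall k, ser (F k) (L k)) -> ser (fun n => psum (fun k => F k n) K) (psum L K).
Proof.
  intros H. induction K. apply ser_zero.
  simpl. apply ser_plus; auto.
Qed.

Lemma ser_finite (f : nat -> C) r : (forall n, (r < n)%nat -> f n = 0) -> ser f (psum f (S r)).
Proof.
  intros H. apply cv_intro. intros eps He. exists (S r). intros n Hn.
  replace (psum f n) with (psum f (S r)). replace (psum f (S r) - psum f (S r)) with (RtoC 0) by ring.
  rewrite Cmod_0. auto.
  induction n. lia. destruct (Nat.eq_dec n r). subst. reflexivity.
  rewrite (psum_S f n), (H n) by lia. rewrite <- IHn by lia. ring.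
Qed.

Lemma psum_shift f k m : psum f (k + m) = psum f k + psum (fun j => f (k + j)%nat) m.
Proof. induction m. rewrite Nat.add_0_r. simpl. ring.
  replace (k + S m)%nat with (S (k + m)) by lia. rewrite !psum_S, IHm. ring. Qed.

Lemma psum_zero (f : nat -> C) k : (forall n, (n < k)%nat -> f n = 0) -> psum f k = 0.
Proof. intros H. induction k. reflexivity. rewrite psum_S, IHk. rewrite H by lia. ring. intros; apply H; lia. Qed.

Lemma ser_shift (f : nat -> C) k l : (forall n, (n < k)%nat -> f n = 0) -> ser (fun m => f (k + m)%nat) l -> ser f l.
Proof.
  intros H Hs. unfold ser. apply (cv_unshift _ _ k).
  eapply cv_ext. 2: exact Hs. intros m. cbv beta. rewrite psum_shift, (psum_zero f k H). ring.
Qed.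

Lemma ser_term0 f l : ser f l -> cv f 0.
Proof.
  intros H. assert (H1 := cv_shift _ _ 1 H).
  assert (H2 := cv_plus _ _ _ _ H1 (cv_mult _ _ _ _ (cv_const (-1)) H)).
  replace (l + -1 * l) with (RtoC 0) in H2 by ring.
  eapply cv_ext. 2: exact H2. intros n. cbv beta. change (1 + n)%nat with (S n). rewrite psum_S. ring.
Qed.

Definition val f := @lim C_CompleteNormedModule (filtermap (psum f) eventually).
Lemma ser_val f l : ser f l -> ser f (val f).
Proof. intros H. unfold val. rewrite (lim_C _ _ H). exact H. Qed.

Lemma Cmod_psum_le (f : nat -> C) (b : nat -> R) N : (forall n, (Cmod (f n) <= b n)%R) ->
  (Cmod (psum f N) <= sum_f_R0 b N - b N)%R.
Proof.
  intros H. induction N. simpl. rewrite Cmod_0. lra.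
  rewrite psum_S. simpl sum_f_R0. eapply Rle_trans. apply Cmod_triangle.
  specialize (H N). lra.
Qed.

Lemma ser_psum_lt (F : nat -> nat -> C) (L : nat -> C) K :
  (forall k, (k < K)%nat -> ser (F k) (L k)) -> ser (fun n => psum (fun k => F k n) K) (psum L K).
Proof.
  intros H. induction K. apply ser_zero.
  simpl. apply ser_plus; auto.
Qed.


Lemma pw_S (x : C) n : @eq C (pow_n x (S n)) (x * pow_n x n).
Proof. reflexivity. Qed.
Lemma pw_0 (x : C) : @eq C (pow_n x 0) (RtoC 1).
Proof. reflexivity. Qed.
Lemma pw_plus (x : C) n m : @eq C (pow_n x (n + m)) (pow_n x n * pow_n x m).
Proof. induction n. rewrite pw_0. rewrite Cmult_1_l. reflexivity.
  replace (S n + m)%nat with (S (n + m)) by lia. rewrite !pw_S, IHn. ring. Qed.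
Lemma pw_mult (x y : C) n : @eq C (pow_n (x * y) n) (pow_n x n * pow_n y n).
Proof. induction n. rewrite !pw_0. ring.
  rewrite !pw_S, IHn. ring. Qed.
Lemma pw_pw (x : C) m k : @eq C (pow_n (pow_n x m) k) (pow_n x (m * k)).
Proof. induction k. rewrite Nat.mul_0_r. reflexivity.
  rewrite pw_S, IHk. replace (m * S k)%nat with (m + m * k)%nat by lia. rewrite pw_plus. reflexivity. Qed.
Lemma pw_neq0 (x : C) n : x <> 0 -> @eq C (pow_n x n) 0 -> False.
Proof. intros H. induction n. rewrite pw_0. intro E. injection E. lra.
  rewrite pw_S. apply Cmult_neq_0; auto. Qed.
Lemma pw_inv (x : C) n : x <> 0 -> @eq C (pow_n (/ x) n) (/ pow_n x n).
Proof. intros H. induction n. rewrite !pw_0. field.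
  rewrite !pw_S, IHn. field. split; auto. intro E; apply (pw_neq0 x n H E). Qed.
Lemma Cmod_pw (x : C) n : Cmod (pow_n x n) = (Cmod x ^ n)%R.
Proof. induction n. simpl. apply Cmod_1. rewrite pw_S, Cmod_mult, IHn. reflexivity. Qed.

Lemma qp_0 a q : qpoch a q 0 = 1.
Proof. reflexivity. Qed.
Lemma qp_S a q n : qpoch a q (S n) = qpoch a q n * (1 - a * pow_n q n).
Proof. reflexivity. Qed.
Lemma qp_add a q k n : qpoch a q (k + n) = qpoch a q k * qpoch (a * pow_n q k) q n.
Proof. induction n. rewrite Nat.add_0_r, qp_0. ring.
  replace (k + S n)%nat with (S (k + n)) by lia. rewrite !qp_S, IHn, pw_plus. ring. Qed.

Lemma Cmod_1m (w : C) : (1 - Cmod w <= Cmod (1 - w))%R.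
Proof. assert (H := Cmod_triangle (1 - w) w). replace (1 - w + w) with (RtoC 1) in H by ring.
  rewrite Cmod_1 in H. lra. Qed.
Lemma Cmod_1p (w : C) : (Cmod (1 - w) <= 1 + Cmod w)%R.
Proof. assert (H := Cmod_triangle 1 (- w)). rewrite Cmod_1, Cmod_opp in H. exact H. Qed.

Lemma pow_le1 (x : R) n : (0 <= x <= 1)%R -> (x ^ n <= 1)%R.
Proof. intros H. induction n. simpl; lra. simpl.
  assert (0 <= x ^ n)%R by (apply pow_le; lra). nra. Qed.

Section QP.
Variable q : C.
Hypothesis Hq0 : (0 < Cmod q)%R.
Hypothesis Hq1 : (Cmod q < 1)%R.
Let rho := Cmod q.

Lemma q_neq0 : q <> 0.
Proof. intro E. rewrite E, Cmod_0 in Hq0. lra. Qed.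

Lemma qp_upper_gen a n : (Cmod (qpoch a q n) <= exp (Cmod a * (1 - rho ^ n) / (1 - rho)))%R.
Proof.
  induction n. simpl. rewrite Cmod_1. replace (Cmod a * (1 - 1) / (1 - rho))%R with 0%R by (field; unfold rho; lra).
  rewrite exp_0. lra.
  rewrite qp_S, Cmod_mult.
  replace (Cmod a * (1 - rho ^ S n) / (1 - rho))%R with (Cmod a * (1 - rho ^ n) / (1 - rho) + Cmod a * rho ^ n)%R
    by (simpl; field; unfold rho; lra).
  rewrite exp_plus. apply Rmult_le_compat; try apply Cmod_ge_0; auto.
  eapply Rle_trans. apply Cmod_1p. rewrite Cmod_mult, Cmod_pw. apply exp_ineq1_le.
Qed.

Definition qbound a := exp (Cmod a / (1 - rho)).

Lemma qp_upper a n : (Cmod (qpoch a q n) <= qbound a)%R.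
Proof.
  eapply Rle_trans. apply qp_upper_gen. unfold qbound.
  destruct (Req_dec (Cmod a * (1 - rho ^ n) / (1 - rho)) (Cmod a / (1 - rho))) as [E|E].
  rewrite E; lra. left. apply exp_increasing.
  assert (0 <= rho ^ n)%R by (apply pow_le; unfold rho; apply Cmod_ge_0).
  assert (0 < 1 - rho)%R by (unfold rho; lra).
  assert (Cmod a * (1 - rho ^ n) <= Cmod a)%R.
  { generalize (Cmod_ge_0 a). nra. }
  assert (Cmod a * (1 - rho ^ n) / (1 - rho) <= Cmod a / (1 - rho))%R.
  { unfold Rdiv. apply Rmult_le_compat_r. left. apply Rinv_0_lt_compat. lra. lra. }
  lra.
Qed.

Lemma qp_lower_gen a n : (Cmod a <= 1)%R ->
  (1 - Cmod a * (1 - rho ^ n) / (1 - rho) <= Cmod (qpoch a q n))%R.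
Proof.
  intros Ha. induction n. simpl. rewrite Cmod_1. replace (Cmod a * (1 - 1) / (1 - rho))%R with 0%R by (field; unfold rho; lra). lra.
  rewrite qp_S, Cmod_mult.
  assert (E : (Cmod a * (1 - rho ^ S n) / (1 - rho) = Cmod a * (1 - rho ^ n) / (1 - rho) + Cmod a * rho ^ n)%R)
    by (simpl; field; unfold rho; lra).
  rewrite E. set (s := (Cmod a * (1 - rho ^ n) / (1 - rho))%R) in *.
  assert (H1 := Cmod_1m (a * pow_n q n)). rewrite Cmod_mult, Cmod_pw in H1. fold rho in H1.
  assert (0 <= rho ^ n <= 1)%R. { split. apply pow_le. unfold rho; apply Cmod_ge_0.
    apply pow_le1. split. unfold rho; apply Cmod_ge_0. unfold rho; lra. }
  assert (0 <= Cmod a * rho ^ n <= 1)%R. { split. apply Rmult_le_pos; try lra. apply Cmod_ge_0.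
    generalize (Cmod_ge_0 a). nra. }
  assert (0 <= s)%R. { unfold s. apply Rmult_le_pos. apply Rmult_le_pos. apply Cmod_ge_0. lra.
    left. apply Rinv_0_lt_compat. unfold rho; lra. }
  destruct (Rle_or_lt 0 (1 - s)) as [Hs|Hs].
  - apply Rle_trans with ((1 - s) * (1 - Cmod a * rho ^ n))%R. nra.
    apply Rmult_le_compat; auto; lra.
  - apply Rle_trans with 0%R. lra. apply Rmult_le_pos; apply Cmod_ge_0.
Qed.

Lemma qp_lower a n : (Cmod a <= (1 - rho) / 2)%R -> (/ 2 <= Cmod (qpoch a q n))%R.
Proof.
  intros Ha. assert (0 < 1 - rho)%R by (unfold rho; lra).
  eapply Rle_trans. 2: apply qp_lower_gen. 2: (unfold rho in *; generalize (Cmod_ge_0 q); lra).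
  assert (0 <= rho ^ n)%R by (apply pow_le; unfold rho; apply Cmod_ge_0).
  assert (Cmod a * (1 - rho ^ n) / (1 - rho) <= Cmod a / (1 - rho))%R.
  { unfold Rdiv. apply Rmult_le_compat_r. left. apply Rinv_0_lt_compat. lra. generalize (Cmod_ge_0 a). nra. }
  assert (Cmod a / (1 - rho) <= / 2)%R.
  { apply Rmult_le_reg_r with (1 - rho)%R. lra. unfold Rdiv. rewrite Rmult_assoc, Rinv_l. lra. lra. }
  lra.
Qed.

Lemma small_pow (c eps : R) : (0 < eps)%R -> exists N, forall n, (N <= n)%nat -> (c * rho ^ n < eps)%R.
Proof.
  intros He. destruct (pow_lt_1_zero rho) with (eps / (Rabs c + 1))%R as [N HN].
  rewrite Rabs_pos_eq; unfold rho; [lra | apply Cmod_ge_0].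
  apply Rdiv_lt_0_compat; auto. generalize (Rabs_pos c); lra.
  exists N. intros n Hn. specialize (HN n Hn).
  rewrite Rabs_pos_eq in HN by (apply pow_le; unfold rho; apply Cmod_ge_0).
  assert (0 <= rho ^ n)%R by (apply pow_le; unfold rho; apply Cmod_ge_0).
  apply Rle_lt_trans with (Rabs c * rho ^ n)%R. apply Rmult_le_compat_r; auto. apply Rle_abs.
  apply Rle_lt_trans with ((Rabs c + 1) * rho ^ n)%R. generalize (Rabs_pos c); nra.
  replace eps with ((Rabs c + 1) * (eps / (Rabs c + 1)))%R by (field; generalize (Rabs_pos c); lra).
  apply Rmult_lt_compat_l; auto. generalize (Rabs_pos c); lra.
Qed.

Lemma fin_lower (f : nat -> C) K : (forall n, f n <> 0) -> exists m, (0 < m)%R /\ forall n, (n < K)%nat -> (m <= Cmod (f n))%R.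
Proof.
  intros H. induction K. exists 1%R. split. lra. intros; lia.
  destruct IHK as [m [Hm HK]]. exists (Rmin m (Cmod (f K))). split.
  apply Rmin_pos; auto. apply Cmod_gt_0. auto.
  intros n Hn. destruct (Nat.eq_dec n K). subst. apply Rmin_r.
  eapply Rle_trans. apply Rmin_l. apply HK. lia.
Qed.

Lemma qp_lower_unif a : (forall n, qpoch a q n <> 0) -> exists m, (0 < m)%R /\ forall n, (m <= Cmod (qpoch a q n))%R.
Proof.
  intros H. assert (0 < 1 - rho)%R by (unfold rho; lra).
  destruct (small_pow (Cmod a) ((1 - rho) / 2)) as [K HK]. lra.
  destruct (fin_lower (qpoch a q) K H) as [m [Hm HmK]].
  exists (Rmin m (Cmod (qpoch a q K) / 2)). split. apply Rmin_pos; auto.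
  assert (0 < Cmod (qpoch a q K))%R by (apply Cmod_gt_0; auto). lra.
  intros n. destruct (Nat.lt_ge_cases n K) as [Hn|Hn].
  eapply Rle_trans. apply Rmin_l. auto.
  eapply Rle_trans. apply Rmin_r. replace n with (K + (n - K))%nat by lia.
  rewrite qp_add, Cmod_mult.
  assert (/2 <= Cmod (qpoch (a * pow_n q K) q (n - K)))%R.
  { apply qp_lower. rewrite Cmod_mult, Cmod_pw. left. apply HK. lia. }
  generalize (Cmod_ge_0 (qpoch a q K)). nra.
Qed.

Lemma qp_cv a : cv (qpoch a q) (qpoch_inf a q).
Proof.
  set (d := fun n => qpoch a q (S n) - qpoch a q n).
  assert (Hd : forall n, (Cmod (d n) <= qbound a * Cmod a * rho ^ n)%R).
  { intros n. unfold d. rewrite qp_S. replace (qpoch a q n * (1 - a * pow_n q n) - qpoch a q n)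
      with (- (qpoch a q n * a * pow_n q n)) by ring.
    rewrite Cmod_opp, !Cmod_mult, Cmod_pw. apply Rmult_le_compat_r. apply pow_le, Cmod_ge_0.
    apply Rmult_le_compat_r. apply Cmod_ge_0. apply qp_upper. }
  destruct (ser_ex d (qbound a * Cmod a) rho) as [l Hl]. split. unfold rho; apply Cmod_ge_0. unfold rho; lra.
  exact Hd.
  assert (Hc : cv (qpoch a q) (1 + l)).
  { eapply cv_ext. 2: apply (cv_plus _ _ _ _ (cv_const 1) Hl).
    intros n. induction n. simpl. ring. rewrite psum_S. replace (1 + (psum d n + d n)) with ((1 + psum d n) + d n) by ring. rewrite IHn. unfold d. ring. }
  unfold qpoch_inf. rewrite (lim_C _ _ Hc). exact Hc.
Qed.

Lemma qp_inf_neq0 a : (forall n, qpoch a q n <> 0) -> qpoch_inf a q <> 0.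
Proof.
  intros H. destruct (qp_lower_unif a H) as [m [Hm Hb]].
  assert (H2 := cv_norm_ge _ _ _ (qp_cv a) Hb). intro E. rewrite E, Cmod_0 in H2. lra.
Qed.

Lemma qp_inf_shift a k : qpoch_inf a q = qpoch a q k * qpoch_inf (a * pow_n q k) q.
Proof.
  apply (cv_unique (fun n => qpoch a q (k + n))). apply cv_shift, qp_cv.
  eapply cv_ext. 2: apply (cv_mult _ _ _ _ (cv_const (qpoch a q k)) (qp_cv (a * pow_n q k))).
  intros n. simpl. rewrite qp_add. reflexivity.
Qed.

Lemma qq_neq0 n : qpoch q q n <> 0.
Proof.
  induction n. rewrite qp_0. intro E; injection E; lra.
  rewrite qp_S. apply Cmult_neq_0; auto. intro E.
  assert (H : Cmod (q * pow_n q n) = 1%R).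
  { replace (q * pow_n q n) with (RtoC 1). apply Cmod_1.
    replace (q * pow_n q n) with (1 - (1 - q * pow_n q n)) by ring. rewrite E. ring. }
  rewrite Cmod_mult, Cmod_pw in H.
  assert (rho ^ n <= 1)%R. { apply pow_le1. split. unfold rho; apply Cmod_ge_0. unfold rho; lra. }
  assert (0 <= rho ^ n)%R by (apply pow_le; unfold rho; apply Cmod_ge_0).
  unfold rho in *. nra.
Qed.

End QP.


Section QG.
Variable q : C.
Hypothesis Hq0 : (0 < Cmod q)%R.
Hypothesis Hq1 : (Cmod q < 1)%R.
Let rho := Cmod q.

Definition gt (A B z : C) (n : nat) : C :=
  qpoch A q n * qpoch B q n / (qpoch q q n * qpoch (A * B * z) q n) * pow_n z n.

Lemma cv_pw0 : cv (pow_n q) 0.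
Proof.
  apply cv_intro. intros eps He. destruct (small_pow q Hq1 1 eps He) as [N HN].
  exists N. intros n Hn. replace (pow_n q n - 0) with (pow_n q n * 1) by ring. rewrite Cmod_mult, Cmod_1, Rmult_1_r.
  rewrite Cmod_pw. specialize (HN n Hn). lra.
Qed.

Lemma gt_bound A B z mq mC : (0 < mq)%R -> (0 < mC)%R -> (forall n, (mq <= Cmod (qpoch q q n))%R) ->
  (forall n, (mC <= Cmod (qpoch (A * B * z) q n))%R) ->
  forall n, (Cmod (gt A B z n) <= qbound q A * qbound q B / (mq * mC) * Cmod z ^ n)%R.
Proof.
  intros Hmq HmC Hq HC n. unfold gt.
  assert (N1 : qpoch q q n <> 0). { intro E. specialize (Hq n). rewrite E, Cmod_0 in Hq. lra. }
  assert (N2 : qpoch (A * B * z) q n <> 0). { intro E. specialize (HC n). rewrite E, Cmod_0 in HC. lra. }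
  rewrite Cmod_mult, Cmod_div, !Cmod_mult, Cmod_pw by (apply Cmult_neq_0; auto).
  apply Rmult_le_compat_r. apply pow_le, Cmod_ge_0.
  unfold Rdiv. apply Rmult_le_compat. apply Rmult_le_pos; apply Cmod_ge_0.
  left. apply Rinv_0_lt_compat. apply Rmult_lt_0_compat; apply Cmod_gt_0; auto.
  apply Rmult_le_compat; try apply Cmod_ge_0; apply (qp_upper q Hq1).
  apply Rinv_le_contravar. apply Rmult_lt_0_compat; auto.
  apply Rmult_le_compat; auto; lra.
Qed.

Lemma gt_ser_ex A B z : (Cmod z < 1)%R -> (forall n, qpoch (A * B * z) q n <> 0) -> exists l, ser (gt A B z) l.
Proof.
  intros Hz HC. destruct (qp_lower_unif q Hq0 Hq1 q (qq_neq0 q Hq0 Hq1)) as [mq [Hmq Hq]].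
  destruct (qp_lower_unif q Hq0 Hq1 _ HC) as [mC [HmC HCb]].
  apply (ser_ex _ (qbound q A * qbound q B / (mq * mC)) (Cmod z)). split. apply Cmod_ge_0. auto.
  apply gt_bound; auto.
Qed.

Lemma gt_fin A B z N : (forall n, qpoch (A * B * z) q n <> 0) ->
  (1 - z) * (1 - A * B * z) * psum (gt A B z) N - (1 - A * z) * (1 - B * z) * psum (gt A B (z * q)) N
  = - (1 - A * B * z) * (1 - pow_n q N) * gt A B z N.
Proof.
  intros HC. induction N.
  rewrite pw_0. simpl. ring.
  rewrite !psum_S.
  transitivity ((1 - z) * (1 - A * B * z) * psum (gt A B z) N - (1 - A * z) * (1 - B * z) * psum (gt A B (z * q)) N
     + ((1 - z) * (1 - A * B * z) * gt A B z N - (1 - A * z) * (1 - B * z) * gt A B (z * q) N)). ring.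
  rewrite IHN. clear IHN.
  assert (E : qpoch (A * B * (z * q)) q N * (1 - A * B * z) = qpoch (A * B * z) q N * (1 - A * B * z * pow_n q N)).
  { replace (A * B * (z * q)) with (A * B * z * pow_n q 1) by (rewrite pw_S, pw_0; ring).
    rewrite <- qp_S. change (S N) with (1 + N)%nat. rewrite qp_add. rewrite qp_S, qp_0, pw_0. ring. }
  assert (HC0 := HC 0%nat). assert (HCN := HC N). assert (HCS := HC (S N)).
  assert (HqS := qq_neq0 q Hq0 Hq1 (S N)). assert (HqN := qq_neq0 q Hq0 Hq1 N).
  rewrite qp_S in HCS, HqS.
  assert (HC1 : 1 - A * B * z <> 0). { intro E'. apply (HC 1%nat). rewrite qp_S, qp_0, pw_0. rewrite <- E'. ring. }
  unfold gt. rewrite !qp_S, !pw_S, pw_mult.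
  assert (E2 : qpoch (A * B * (z * q)) q N = qpoch (A * B * z) q N * (1 - A * B * z * pow_n q N) / (1 - A * B * z)).
  { rewrite <- E. field. auto. }
  rewrite E2.
  set (a := qpoch A q N) in *. set (b := qpoch B q N) in *. set (g := qpoch q q N) in *.
  set (c := qpoch (A * B * z) q N) in *. set (X := pow_n q N) in *. set (Z := pow_n z N) in *.
  assert (c <> 0) by auto.
  assert (1 - A * B * z * X <> 0). { intro E'. apply HCS. rewrite E'. ring. }
  assert (1 - q * X <> 0). { intro E'. apply HqS. rewrite E'. ring. }
  field. repeat split; auto.
Qed.

Definition F A B z := val (gt A B z).

Lemma F_ser A B z : (Cmod z < 1)%R -> (forall n, qpoch (A * B * z) q n <> 0) -> ser (gt A B z) (F A B z).
Proof. intros Hz HC. destruct (gt_ser_ex A B z Hz HC) as [l Hl]. apply ser_val in Hl. exact Hl. Qed.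

Lemma qp_shift_neq0 a k : (forall n, qpoch a q n <> 0) -> forall n, qpoch (a * pow_n q k) q n <> 0.
Proof. intros H n E. apply (H (k + n)%nat). rewrite qp_add, E. ring. Qed.

Lemma F_rel A B z : (Cmod z < 1)%R -> (forall n, qpoch (A * B * z) q n <> 0) ->
  (1 - z) * (1 - A * B * z) * F A B z = (1 - A * B * z) * 0 + (1 - A * z) * (1 - B * z) * F A B (z * q).
Proof.
  intros Hz HC.
  assert (Hzq : (Cmod (z * q) < 1)%R).
  { rewrite Cmod_mult. assert (0 <= Cmod z)%R by apply Cmod_ge_0. unfold rho in *. nra. }
  assert (HCq : forall n, qpoch (A * B * (z * q)) q n <> 0).
  { intros n. replace (A * B * (z * q)) with (A * B * z * pow_n q 1) by (rewrite pw_S, pw_0; ring).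
    apply qp_shift_neq0; auto. }
  assert (S1 := F_ser A B z Hz HC). assert (S2 := F_ser A B (z * q) Hzq HCq).
  assert (L := cv_plus _ _ _ _ (cv_mult _ _ _ _ (cv_const ((1 - z) * (1 - A * B * z))) S1)
                                (cv_mult _ _ _ _ (cv_const (- ((1 - A * z) * (1 - B * z)))) S2)).
  assert (T0 := ser_term0 _ _ S1).
  assert (R := cv_mult _ _ _ _ (cv_const (- (1 - A * B * z)))
                 (cv_mult _ _ _ _ (cv_plus _ _ _ _ (cv_const 1) (cv_mult _ _ _ _ (cv_const (-1)) cv_pw0)) T0)).
  assert (U : (1 - z) * (1 - A * B * z) * F A B z + - ((1 - A * z) * (1 - B * z)) * F A B (z * q)
              = - (1 - A * B * z) * ((1 + -1 * 0) * 0)).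
  { apply (cv_unique _ _ _ L). eapply cv_ext. 2: exact R. intros n. cbv beta.
    assert (G := gt_fin A B z n HC).
    transitivity (- (1 - A * B * z) * (1 - pow_n q n) * gt A B z n). ring. rewrite <- G. ring. }
  replace ((1 - z) * (1 - A * B * z) * F A B z) with
    ((1 - z) * (1 - A * B * z) * F A B z + - ((1 - A * z) * (1 - B * z)) * F A B (z * q)
     + (1 - A * z) * (1 - B * z) * F A B (z * q)) by ring.
  rewrite U. ring.
Qed.


Lemma F_iter A B z : (Cmod z < 1)%R -> (forall n, qpoch (A * B * z) q n <> 0) ->
  forall N, qpoch z q N * qpoch (A * B * z) q N * F A B z
          = qpoch (A * z) q N * qpoch (B * z) q N * F A B (z * pow_n q N).
Proof.
  intros Hz HC N. induction N.
  - rewrite !qp_0, pw_0. replace (z * 1) with z by ring. ring.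
  - rewrite !qp_S. rewrite pw_S.
    set (w := z * pow_n q N).
    replace (z * (q * pow_n q N)) with (w * q) by (unfold w; ring).
    assert (Hw : (Cmod w < 1)%R).
    { unfold w. rewrite Cmod_mult, Cmod_pw.
      assert (Cmod q ^ N <= 1)%R by (apply pow_le1; split; [apply Cmod_ge_0 | lra]).
      assert (0 <= Cmod z)%R by apply Cmod_ge_0. nra. }
    assert (HCw : forall n, qpoch (A * B * w) q n <> 0).
    { intros n. replace (A * B * w) with (A * B * z * pow_n q N) by (unfold w; ring).
      apply qp_shift_neq0; auto. }
    assert (R := F_rel A B w Hw HCw).
    transitivity (qpoch z q N * qpoch (A * B * z) q N * F A B z * ((1 - w) * (1 - A * B * w))).
    unfold w; ring. rewrite IHN. fold w.
    transitivity (qpoch (A * z) q N * qpoch (B * z) q N * ((1 - w) * (1 - A * B * w) * F A B w)). ring.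
    rewrite R. unfold w. ring.
Qed.

Lemma geom_sum (M x : R) N : x <> 1%R -> sum_f_R0 (fun n => M * x ^ (S n))%R N = (M * x * (1 - x ^ (S N)) / (1 - x))%R.
Proof. intros Hx. induction N. simpl. field. intro; apply Hx; lra.
  rewrite tech5, IHN. simpl. field. intro; apply Hx; lra. Qed.

Lemma F_bound A B w mq : (0 < mq)%R -> (forall n, (mq <= Cmod (qpoch q q n))%R) ->
  (Cmod w <= / 2)%R -> (Cmod (A * B * w) <= (1 - rho) / 2)%R ->
  (Cmod (F A B w - 1) <= 2 * (qbound q A * qbound q B / (mq * / 2)) * Cmod w)%R.
Proof.
  intros Hmq Hq Hw HA.
  assert (Hlow : forall n, (/ 2 <= Cmod (qpoch (A * B * w) q n))%R) by (intros; apply qp_lower; auto).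
  assert (HC : forall n, qpoch (A * B * w) q n <> 0).
  { intros n E. specialize (Hlow n). rewrite E, Cmod_0 in Hlow. lra. }
  assert (Hw1 : (Cmod w < 1)%R) by lra.
  assert (Hser := F_ser A B w Hw1 HC).
  set (M := (qbound q A * qbound q B / (mq * / 2))%R).
  assert (Hb : forall n, (Cmod (gt A B w n) <= M * Cmod w ^ n)%R).
  { apply gt_bound; auto. lra. }
  assert (HM : (0 <= M)%R).
  { unfold M, qbound. apply Rmult_le_pos. apply Rmult_le_pos; left; apply exp_pos.
    left. apply Rinv_0_lt_compat. lra. }
  assert (G0 : gt A B w 0 = 1). { unfold gt. rewrite !qp_0, pw_0. field. }
  assert (Cv : cv (fun N => psum (fun j => gt A B w (1 + j)%nat) N) (F A B w + -1)).
  { eapply cv_ext. 2: apply (cv_plus _ _ _ _ (cv_shift _ _ 1 Hser) (cv_const (-1))).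
    intros N. cbv beta. rewrite psum_shift. simpl psum. rewrite G0. ring. }
  replace (F A B w - 1) with (F A B w + -1) by ring.
  apply (cv_norm_le _ _ _ Cv). intros N.
  eapply Rle_trans. apply (Cmod_psum_le _ (fun n => M * Cmod w ^ (S n))%R N). intros n. apply (Hb (S n)).
  rewrite geom_sum by lra.
  assert (0 <= M * Cmod w ^ S N)%R. { apply Rmult_le_pos; auto. apply pow_le, Cmod_ge_0. }
  assert (0 <= Cmod w)%R by apply Cmod_ge_0.
  assert (0 <= Cmod w ^ S N)%R by (apply pow_le, Cmod_ge_0).
  assert (M * Cmod w * (1 - Cmod w ^ S N) / (1 - Cmod w) <= 2 * M * Cmod w)%R.
  { apply Rmult_le_reg_r with (1 - Cmod w)%R. lra. unfold Rdiv. rewrite Rmult_assoc, Rinv_l by lra.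
    assert (0 <= M * Cmod w)%R by (apply Rmult_le_pos; auto).
    assert (M * Cmod w * (1 - Cmod w ^ S N) <= M * Cmod w)%R by nra. nra. }
  lra.
Qed.

Lemma F_cv1 A B z : (Cmod z < 1)%R -> cv (fun N => F A B (z * pow_n q N)) 1.
Proof.
  intros Hz. destruct (qp_lower_unif q Hq0 Hq1 q (qq_neq0 q Hq0 Hq1)) as [mq [Hmq Hq]].
  set (M := (qbound q A * qbound q B / (mq * / 2))%R).
  apply cv_intro. intros eps He.
  destruct (small_pow q Hq1 (Cmod (A * B * z)) ((1 - rho) / 2)) as [N1 H1]. unfold rho; lra.
  destruct (small_pow q Hq1 (Cmod z) (/ 2)) as [N2 H2]. lra.
  destruct (small_pow q Hq1 (2 * M * Cmod z) eps He) as [N3 H3].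
  exists (N1 + N2 + N3)%nat. intros n Hn.
  specialize (H1 n ltac:(lia)). specialize (H2 n ltac:(lia)). specialize (H3 n ltac:(lia)).
  eapply Rle_lt_trans. apply (F_bound A B (z * pow_n q n) mq Hmq Hq).
  rewrite Cmod_mult, Cmod_pw. lra.
  replace (A * B * (z * pow_n q n)) with (A * B * z * pow_n q n) by ring.
  rewrite Cmod_mult, Cmod_pw. unfold rho in *. lra.
  rewrite Cmod_mult, Cmod_pw. fold M. rewrite <- Rmult_assoc. exact H3.
Qed.

Lemma qgauss A B z : (Cmod z < 1)%R -> (forall n, qpoch (A * B * z) q n <> 0) ->
  F A B z * (qpoch_inf z q * qpoch_inf (A * B * z) q) = qpoch_inf (A * z) q * qpoch_inf (B * z) q.
Proof.
  intros Hz HC.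
  assert (L1 := cv_mult _ _ _ _ (cv_mult _ _ _ _ (qp_cv q Hq1 z) (qp_cv q Hq1 (A * B * z))) (cv_const (F A B z))).
  assert (L2 := cv_mult _ _ _ _ (cv_mult _ _ _ _ (qp_cv q Hq1 (A * z)) (qp_cv q Hq1 (B * z))) (F_cv1 A B z Hz)).
  assert (E : qpoch_inf z q * qpoch_inf (A * B * z) q * F A B z = qpoch_inf (A * z) q * qpoch_inf (B * z) q * 1).
  { apply (cv_unique _ _ _ L1). eapply cv_ext. 2: exact L2. intros N. cbv beta.
    rewrite (F_iter A B z Hz HC N). reflexivity. }
  transitivity (qpoch_inf z q * qpoch_inf (A * B * z) q * F A B z). ring. rewrite E. ring.
Qed.

End QG.


Section ALG.
Variable q : C.
Hypothesis Hq : q <> 0.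

Lemma pwq_neq0 n : (pow_n q n : C) <> 0.
Proof. intro E. apply (pw_neq0 q n Hq E). Qed.

Fixpoint Wp (x : C) (k : nat) : C :=
  match k with O => 1 | S j => Wp x j * (x - / pow_n q j) end.

Fixpoint Phi (D w : C) (r : nat) : C :=
  match r with O => 1 | S j => Phi D w j * (w - D * pow_n q j) end.

Lemma Wp_S x k : Wp x (S k) = Wp x k * (x - / pow_n q k).
Proof. reflexivity. Qed.
Lemma Wp_0 x : Wp x 0 = 1.
Proof. reflexivity. Qed.
Lemma Phi_S D w r : Phi D w (S r) = Phi D w r * (w - D * pow_n q r).
Proof. reflexivity. Qed.

Definition sq k : C := pow_n (pow_n q k) k.

Lemma W_vanish n k : (n < k)%nat -> Wp (/ pow_n q n) k = 0.
Proof.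
  induction k; intros H. lia. simpl. destruct (Nat.eq_dec n k).
  subst. ring. rewrite IHk by lia. ring.
Qed.

Lemma W_shift k : forall m, Wp (/ pow_n q (k + m)) k * pow_n (pow_n q (k + m)) k * qpoch q q m = qpoch q q (k + m).
Proof.
  induction k; intros m.
  - rewrite !pw_0. simpl. ring.
  - specialize (IHk (S m)). replace (k + S m)%nat with (S k + m)%nat in IHk by lia.
    rewrite <- IHk. rewrite qp_S. rewrite ?Wp_S. rewrite pw_S.
    assert (EQ : @eq C (pow_n q (S k + m)) (pow_n q k * (q * pow_n q m))).
    { replace (S k + m)%nat with (k + S m)%nat by lia. rewrite pw_plus, pw_S. reflexivity. }
    rewrite EQ. assert (H1 := pwq_neq0 k). assert (H2 := pwq_neq0 m).
    field. auto.
Qed.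

Lemma W_div (x : C) k : Wp (x / q) (S k) = (x - q) / pow_n q (S k) * Wp x k.
Proof.
  induction k.
  - rewrite Wp_S, !Wp_0, pw_S, !pw_0. field. auto.
  - change (Wp (x / q) (S (S k))) with (Wp (x / q) (S k) * (x / q - / pow_n q (S k))).
    rewrite IHk. rewrite ?Wp_S. rewrite !pw_S. assert (H1 := pwq_neq0 k). field. auto.
Qed.

Lemma W_rhs (z0 V : C) k : z0 <> 0 ->
  Wp V k * pow_n z0 k * qpoch (q / z0) q k = qpoch V q k * pow_n q k * qpoch (z0 / pow_n q k) q k.
Proof.
  intros Hz. induction k.
  - rewrite !pw_0, Wp_0, !qp_0. ring.
  - assert (E : qpoch (z0 / pow_n q (S k)) q (S k) = (1 - z0 / pow_n q (S k)) * qpoch (z0 / pow_n q k) q k).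
    { transitivity (qpoch (z0 / pow_n q (S k)) q (1 + k)). reflexivity. rewrite qp_add. rewrite qp_S, qp_0, pw_0.
      assert (Eq : z0 / pow_n q (S k) * pow_n q 1 = z0 / pow_n q k).
      { rewrite !pw_S, pw_0. assert (H1 := pwq_neq0 k). field. auto. }
      rewrite Eq. ring. }
    rewrite E. rewrite ?Wp_S. rewrite !qp_S, !pw_S.
    transitivity ((Wp V k * pow_n z0 k * qpoch (q / z0) q k) * ((V - / pow_n q k) * z0 * (1 - q / z0 * pow_n q k))).
    ring. rewrite IHk. assert (H1 := pwq_neq0 k). field. auto.
Qed.

Lemma Phi_qp (D x : C) r : x <> 0 -> qpoch (D * x) q r = pow_n x r * Phi D (/ x) r.
Proof.
  intros Hx. induction r.
  - rewrite pw_0. simpl. ring.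
  - rewrite qp_S, IHr. rewrite Phi_S. rewrite pw_S. field. auto.
Qed.

Lemma psum_scal c f N : c * psum f N = psum (fun k => c * f k) N.
Proof. induction N. simpl. ring. rewrite !psum_S, <- IHN. ring. Qed.

Lemma psum_plus f g N : psum (fun k => f k + g k) N = psum f N + psum g N.
Proof. induction N. simpl. ring. rewrite !psum_S, IHN. ring. Qed.

Lemma psum_ext f g N : (forall k, f k = g k) -> psum f N = psum g N.
Proof. intros H. induction N. reflexivity. rewrite !psum_S, IHN, H. reflexivity. Qed.

Lemma psum_first f N : psum f (S N) = f 0%nat + psum (fun k => f (S k)) N.
Proof. change (S N) with (1 + N)%nat. rewrite psum_shift. simpl. ring. Qed.

Section DL.
Variable D : C.
Hypothesis HD : forall n, qpoch D q n <> 0.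
Hypothesis Hqq : forall n, qpoch q q n <> 0.

Definition dl r k := Wp (/ pow_n q r) k * sq k * qpoch D q r / (qpoch q q k * qpoch D q k).

Lemma sq_S k : sq (S k) = sq k * pow_n q k * pow_n q k * q.
Proof.
  unfold sq. rewrite !pw_pw.
  replace (S k * S k)%nat with (k * k + (k + k + 1))%nat by lia.
  rewrite !pw_plus. rewrite pw_S, pw_0. ring.
Qed.

Lemma dl_0 r : dl r 0 = qpoch D q r.
Proof. unfold dl, sq. rewrite !pw_0. simpl. field. Qed.

Lemma dl_top r : dl r (S r) = 0.
Proof. unfold dl. rewrite ?Wp_S. replace (/ pow_n q r - / pow_n q r) with (RtoC 0) by ring. field.
  split; auto. Qed.

Lemma dl_S r k : dl (S r) (S k) = dl r k + (/ pow_n q (S k) - D * pow_n q r) * dl r (S k).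
Proof.
  unfold dl. rewrite sq_S.
  replace (/ pow_n q (S r)) with ((/ pow_n q r) / q) by (rewrite pw_S; field; split; auto; apply pwq_neq0).
  rewrite W_div. rewrite ?Wp_S. rewrite !qp_S, !pw_S.
  assert (H1 := pwq_neq0 k). assert (H2 := pwq_neq0 r).
  assert (H3 := HD k). assert (H4 := HD r). assert (H5 := HD (S k)). assert (H6 := Hqq k). assert (H7 := Hqq (S k)).
  rewrite qp_S in H5, H7.
  set (w := Wp (/ pow_n q r) k). set (s := sq k). set (Qk := pow_n q k). set (Qr := pow_n q r).
  set (dk := qpoch D q k). set (dr := qpoch D q r). set (gk := qpoch q q k).
  assert (1 - D * Qk <> 0). { intro E. apply H5. fold dk Qk. rewrite E. ring. }
  assert (1 - q * Qk <> 0). { intro E. apply H7. fold gk Qk. rewrite E. ring. }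
  field. repeat split; auto.
Qed.

Lemma Phi_expand w r : Phi D w r = psum (fun k => dl r k * Wp w k) (S r).
Proof.
  induction r.
  - simpl. rewrite dl_0. simpl. ring.
  - set (h := fun k => dl r k * Wp w (S k)).
    set (g := fun k => (/ pow_n q k - D * pow_n q r) * dl r k * Wp w k).
    rewrite Phi_S. rewrite IHr.
    transitivity (psum h (S r) + psum g (S r)).
    { rewrite <- psum_plus, Cmult_comm, psum_scal. apply psum_ext. intros k. unfold h, g. rewrite ?Wp_S. ring. }
    rewrite (psum_first g r).
    assert (Eg : psum (fun k => g (S k)) r = psum (fun k => g (S k)) (S r)).
    { rewrite psum_S. cbv beta. assert (Hg : g (S r) = 0). { unfold g. rewrite dl_top. ring. } rewrite Hg. ring. }
    rewrite Eg. rewrite (psum_first (fun k => dl (S r) k * Wp w k) (S r)).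
    transitivity (g 0%nat + psum (fun k => h k + g (S k)) (S r)).
    { rewrite psum_plus. ring. }
    f_equal. unfold g. rewrite !dl_0. rewrite ?Wp_S. rewrite pw_0, qp_S. field.
    apply psum_ext. intros k. unfold h, g. rewrite dl_S. rewrite ?Wp_S. ring.
Qed.

End DL.
End ALG.


Lemma qz_step (q z0 : C) k : q <> 0 ->
  qpoch (z0 / pow_n q (S k)) q (S k) = (1 - z0 / pow_n q (S k)) * qpoch (z0 / pow_n q k) q k.
Proof.
  intros Hq. transitivity (qpoch (z0 / pow_n q (S k)) q (1 + k)). reflexivity. rewrite qp_add. rewrite qp_S, qp_0, pw_0.
  assert (Eq : z0 / pow_n q (S k) * pow_n q 1 = z0 / pow_n q k).
  { rewrite !pw_S, pw_0. assert (H1 := pwq_neq0 q Hq k). field. auto. }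
  rewrite Eq. ring.
Qed.

Lemma qz_neq0 (q z0 : C) : q <> 0 -> z0 <> 0 -> (forall n, qpoch (q / z0) q n <> 0) ->
  forall k, qpoch (z0 / pow_n q k) q k <> 0.
Proof.
  intros Hq Hz HZ k. induction k.
  - rewrite qp_0. intro E; injection E; lra.
  - rewrite qz_step by auto. apply Cmult_neq_0; auto.
    intro E. apply (HZ (S k)). rewrite qp_S.
    assert (Ez : z0 = pow_n q (S k)).
    { assert (H1 := pwq_neq0 q Hq (S k)).
      replace z0 with (pow_n q (S k) * (1 - (1 - z0 / pow_n q (S k)))) by (field; auto).
      rewrite E. ring. }
    rewrite Ez, pw_S. assert (H1 := pwq_neq0 q Hq k).
    replace (1 - q / (q * pow_n q k) * pow_n q k) with (RtoC 0) by (field; split; auto). ring.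
Qed.

Lemma psum_ext_lt (f g : nat -> C) N : (forall k, (k < N)%nat -> f k = g k) -> psum f N = psum g N.
Proof. intros H. induction N. reflexivity. rewrite !psum_S, IHN. rewrite H by lia. reflexivity. intros; apply H; lia. Qed.

Lemma core (q A B z0 D : C) (r : nat) :
  (0 < Cmod q)%R -> (Cmod q < 1)%R -> z0 <> 0 ->
  (forall n, qpoch (A * B * z0) q n <> 0) -> (forall n, qpoch D q n <> 0) ->
  (forall n, qpoch (q / z0) q n <> 0) -> (forall n, qpoch z0 q n <> 0) ->
  (Cmod (z0 / pow_n q r) < 1)%R ->
  phi32 A B (D * pow_n q r) (A * B * z0) D q (z0 / pow_n q r)
  = qpoch_inf (A * z0) q * qpoch_inf (B * z0) q / (qpoch_inf z0 q * qpoch_inf (A * B * z0) q)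
    * phi32 A (/ pow_n q r) B (q / z0) D q q.
Proof.
  intros H0 H1 Hz HC HD HZ HZ0 Hzr.
  assert (Hq : q <> 0) by (apply q_neq0; auto).
  assert (Hqq := qq_neq0 q H0 H1).
  assert (Hpw := pwq_neq0 q Hq).
  set (u := fun n => qpoch A q n * qpoch B q n / (qpoch q q n * qpoch (A * B * z0) q n) * pow_n z0 n).
  set (G := fun k => F q (A * pow_n q k) (B * pow_n q k) (z0 / pow_n q k)).
  set (valk := fun k => qpoch A q k * qpoch B q k * pow_n z0 k / (sq q k * qpoch (A * B * z0) q k) * G k).
  assert (Sa : forall n, phi32_term A B (D * pow_n q r) (A * B * z0) D q (z0 / pow_n q r) n
     = psum (fun k => dl q D r k / qpoch D q r * (u n * Wp q (/ pow_n q n) k)) (S r)).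
  { intros n.
    transitivity (u n / qpoch D q r * Phi q D (/ pow_n q n) r).
    2: { rewrite (Phi_expand q Hq D HD Hqq), psum_scal. apply psum_ext. intros k.
         assert (HDr := HD r). field. auto. }
    assert (E1 : qpoch (D * pow_n q r) q n = qpoch D q n * qpoch (D * pow_n q n) q r / qpoch D q r).
    { rewrite <- qp_add. rewrite Nat.add_comm, qp_add. field. apply HD. }
    assert (E2 := Phi_qp q D (pow_n q n) r (Hpw n)).
    assert (E3 : pow_n (z0 / pow_n q r) n = pow_n z0 n / pow_n (pow_n q n) r).
    { unfold Cdiv. rewrite pw_mult, pw_inv by apply Hpw. rewrite !pw_pw, Nat.mul_comm. reflexivity. }
    unfold phi32_term. rewrite E1, E2, E3. unfold u.
    assert (HDn := HD n). assert (HDr := HD r). assert (HCn := HC n). assert (Hqn := Hqq n).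
    assert (Hp := pw_neq0 (pow_n q n) r (Hpw n)).
    field. repeat split; auto. }
  assert (Sb : forall k, (k < S r)%nat -> ser (fun n => u n * Wp q (/ pow_n q n) k) (valk k)).
  { intros k Hk.
    apply (ser_shift (fun n => (u n * Wp q (/ pow_n q n) k)%C) k (valk k)). intros n Hn. cbv beta. rewrite W_vanish by lia. ring.
    assert (Hzk : (Cmod (z0 / pow_n q k) < 1)%R).
    { replace (z0 / pow_n q k) with (z0 / pow_n q r * pow_n q (r - k)).
      rewrite Cmod_mult, Cmod_pw.
      assert (Cmod q ^ (r - k) <= 1)%R by (apply pow_le1; split; [apply Cmod_ge_0 | lra]).
      assert (0 <= Cmod (z0 / pow_n q r))%R by apply Cmod_ge_0. nra.
      replace r with (k + (r - k))%nat at 1 by lia. rewrite pw_plus.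
      assert (H2 := Hpw k). assert (H3 := Hpw (r - k)%nat). field. auto. }
    assert (Eargs : A * pow_n q k * (B * pow_n q k) * (z0 / pow_n q k) = A * B * z0 * pow_n q k).
    { assert (H2 := Hpw k). field. auto. }
    assert (HCk : forall n, qpoch (A * pow_n q k * (B * pow_n q k) * (z0 / pow_n q k)) q n <> 0).
    { intros n. rewrite Eargs. apply qp_shift_neq0. auto. }
    assert (HG := F_ser q H0 H1 _ _ _ Hzk HCk).
    eapply ser_ext. 2: apply (ser_scal (qpoch A q k * qpoch B q k * pow_n z0 k / (sq q k * qpoch (A * B * z0) q k)) _ _ HG).
    intros m. cbv beta. unfold gt, u. rewrite Eargs.
    rewrite (qp_add A q k m), (qp_add B q k m), (qp_add (A * B * z0) q k m), pw_plus.
    assert (EW := W_shift q Hq k m).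
    assert (Eq1 : pow_n (pow_n q (k + m)) k = sq q k * pow_n (pow_n q k) m).
    { unfold sq. rewrite !pw_pw, <- pw_plus. f_equal. lia. }
    assert (Eq2 : pow_n (z0 / pow_n q k) m = pow_n z0 m / pow_n (pow_n q k) m).
    { unfold Cdiv. rewrite pw_mult, pw_inv by apply Hpw. reflexivity. }
    rewrite Eq1 in EW. rewrite Eq2.
    assert (EW2 : Wp q (/ pow_n q (k + m)) k = qpoch q q (k + m) / (sq q k * pow_n (pow_n q k) m * qpoch q q m)).
    { rewrite <- EW. assert (Hs : sq q k <> 0) by (intro Es; apply (pw_neq0 (pow_n q k) k (Hpw k) Es)).
      assert (Hs2 := pw_neq0 (pow_n q k) m (Hpw k)). field. repeat split; auto. }
    rewrite EW2. unfold G.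
    assert (Hs : sq q k <> 0) by (intro Es; apply (pw_neq0 (pow_n q k) k (Hpw k) Es)).
    assert (Hs2 := pw_neq0 (pow_n q k) m (Hpw k)).
    assert (HCk0 := HC k). assert (HCk1 := HCk m). rewrite Eargs in HCk1.
    assert (HCkm := HC (k + m)%nat). rewrite qp_add in HCkm.
    assert (Hqm := Hqq m). assert (Hqkm := Hqq (k + m)%nat).
    field. repeat split; auto. }
  assert (Sc : ser (phi32_term A B (D * pow_n q r) (A * B * z0) D q (z0 / pow_n q r))
                   (psum (fun k => dl q D r k / qpoch D q r * valk k) (S r))).
  { eapply ser_ext. intros n. symmetry. apply Sa.
    apply (ser_psum_lt (fun k n => dl q D r k / qpoch D q r * (u n * Wp q (/ pow_n q n) k))
                       (fun k => dl q D r k / qpoch D q r * valk k) (S r)).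
    intros k Hk. apply ser_scal. apply Sb; auto. }
  assert (Se : ser (phi32_term A (/ pow_n q r) B (q / z0) D q q)
                   (psum (phi32_term A (/ pow_n q r) B (q / z0) D q q) (S r))).
  { apply ser_finite. intros n Hn. unfold phi32_term.
    replace n with (S r + (n - S r))%nat by lia. rewrite (qp_add (/ pow_n q r) q (S r)).
    rewrite (qp_S (/ pow_n q r) q r). replace (/ pow_n q r * pow_n q r) with (RtoC 1) by (field; apply Hpw).
    replace (qpoch (/ pow_n q r) q r * (1 - 1)) with (RtoC 0) by ring. unfold Cdiv. repeat rewrite ?Cmult_0_l, ?Cmult_0_r. reflexivity. }
  unfold phi32. rewrite (ser_lim _ _ Sc), (ser_lim _ _ Se).
  rewrite psum_scal. apply psum_ext_lt. intros k Hk.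
  unfold valk, G.
  assert (Hzk : (Cmod (z0 / pow_n q k) < 1)%R).
  { replace (z0 / pow_n q k) with (z0 / pow_n q r * pow_n q (r - k)).
    rewrite Cmod_mult, Cmod_pw.
    assert (Cmod q ^ (r - k) <= 1)%R by (apply pow_le1; split; [apply Cmod_ge_0 | lra]).
    assert (0 <= Cmod (z0 / pow_n q r))%R by apply Cmod_ge_0. nra.
    replace r with (k + (r - k))%nat at 1 by lia. rewrite pw_plus.
    assert (H2 := Hpw k). assert (H3 := Hpw (r - k)%nat). field. auto. }
  assert (Eargs : A * pow_n q k * (B * pow_n q k) * (z0 / pow_n q k) = A * B * z0 * pow_n q k).
  { assert (H2 := Hpw k). field. auto. }
  assert (HCk : forall n, qpoch (A * pow_n q k * (B * pow_n q k) * (z0 / pow_n q k)) q n <> 0).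
  { intros n. rewrite Eargs. apply qp_shift_neq0. auto. }
  assert (HGk := qgauss q H0 H1 _ _ _ Hzk HCk).
  rewrite Eargs in HGk.
  replace (A * pow_n q k * (z0 / pow_n q k)) with (A * z0) in HGk by (assert (H2 := Hpw k); field; auto).
  replace (B * pow_n q k * (z0 / pow_n q k)) with (B * z0) in HGk by (assert (H2 := Hpw k); field; auto).
  rewrite (qp_inf_shift q H1 (z0 / pow_n q k) k) in HGk.
  replace (z0 / pow_n q k * pow_n q k) with z0 in HGk by (assert (H2 := Hpw k); field; auto).
  rewrite (qp_inf_shift q H1 (A * B * z0) k).
  set (Gk := F q (A * pow_n q k) (B * pow_n q k) (z0 / pow_n q k)) in *.
  assert (Hzq := qz_neq0 q z0 Hq Hz HZ k).
  assert (Hi0 := qp_inf_neq0 q H0 H1 z0 HZ0).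
  assert (Hi1 := qp_inf_neq0 q H0 H1 _ (qp_shift_neq0 q (A * B * z0) k HC)).
  assert (EG : @eq C Gk (qpoch_inf (A * z0) q * qpoch_inf (B * z0) q /
                    (qpoch (z0 / pow_n q k) q k * qpoch_inf z0 q * qpoch_inf (A * B * z0 * pow_n q k) q))).
  { rewrite <- HGk. symmetry. field. repeat split; auto. }
  rewrite EG. unfold phi32_term.
  assert (EV := W_rhs q Hq z0 (/ pow_n q r) k Hz).
  assert (EV2 : qpoch (/ pow_n q r) q k = Wp q (/ pow_n q r) k * pow_n z0 k * qpoch (q / z0) q k
                                         / (pow_n q k * qpoch (z0 / pow_n q k) q k)).
  { rewrite EV. field. split; auto. }
  rewrite EV2. unfold dl.
  assert (Hs : sq q k <> 0) by (intro Es; apply (pw_neq0 (pow_n q k) k (Hpw k) Es)).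
  assert (HDr := HD r). assert (HDk := HD k). assert (HCk0 := HC k). assert (Hqk := Hqq k).
  assert (HZk := HZ k). assert (Hpk := Hpw k).
  field. repeat split; auto.
Qed.

Theorem mainTheorem12 (q a b t u v x y : C) (r : nat) :
  (0 < Cmod q)%R -> (Cmod q < 1)%R ->
  a <> 0 -> b <> 0 -> t <> 0 -> u <> 0 -> v <> 0 -> x <> 0 ->
  v / u = / pow_n q r ->
  (forall n : nat, qpoch (y * q / a) q n <> 0) ->
  (forall n : nat, qpoch (q / (a * u * t)) q n <> 0) ->
  (forall n : nat, qpoch (q / (x * b * t)) q n <> 0) ->
  (forall n : nat, qpoch (x * b * t) q n <> 0) ->
  (Cmod (x * b * v * t / u) < 1)%R ->
  phi32 (y / x) (q / (a * b * t)) (q / (a * v * t))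
        (y * q / a) (q / (a * u * t)) q (x * b * v * t / u)
  = qpoch_inf (y * b * t) q * qpoch_inf (x * q / a) q
    / (qpoch_inf (x * b * t) q * qpoch_inf (y * q / a) q)
    * phi32 (y / x) (v / u) (q / (a * b * t))
            (q / (x * b * t)) (q / (a * u * t)) q q.
Proof.
  intros H0 H1 Ha Hb Ht Hu Hv Hx Hvu HC HD HZ HZ0 Hz.
  assert (Hq : q <> 0) by (apply q_neq0; auto).
  assert (Hpr := pwq_neq0 q Hq r).
  assert (Ev : v = u / pow_n q r).
  { replace v with (v / u * u) by (field; auto). rewrite Hvu. field. auto. }
  assert (E1 : q / (a * v * t) = q / (a * u * t) * pow_n q r).
  { rewrite Ev. field. repeat split; auto. }
  assert (E2 : x * b * v * t / u = x * b * t / pow_n q r).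
  { rewrite Ev. field. repeat split; auto. }
  assert (E3 : y * q / a = y / x * (q / (a * b * t)) * (x * b * t)).
  { field. repeat split; auto. }
  assert (E4 : y * b * t = y / x * (x * b * t)).
  { field. auto. }
  assert (E5 : x * q / a = q / (a * b * t) * (x * b * t)).
  { field. repeat split; auto. }
  rewrite E1, E2, E3, Hvu, E4, E5. rewrite E3 in HC. rewrite E2 in Hz.
  apply core; auto.
  apply Cmult_neq_0; auto. apply Cmult_neq_0; auto.
Qed.
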